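(* Let $\Bbbk$ be a field and $q\in\Bbbk$ with $[m]_q:=1+q+\cdots+q^{m-1}\ne0$ for all $m\ge1$; put $[k]_q!=[1]_q\cdots[k]_q$. Let $f(t)=\sum_{k\ge0}\frac{t^k}{[k]_q!}$, so $a_k=1/[k]_q!$. Then for all $k\ge1$, $$P_{f,k}(t)=\frac{(t-1)(t-q)\cdots(t-q^{k-1})}{[k]_q!},$$ where $P_{f,k}(t)=(-1)^k\det\begin{pmatrix} 1&a_1t&\ldots &a_kt^k\\ 1&a_1&\ldots &a_k\\ 0&1&\ldots &a_{k-1}\\ \vdots&\ddots&\ddots&\vdots\\ 0&\ldots &1&a_1 \end{pmatrix}$.
   Context: The determinant is $(k+1)\times(k+1)$: first row $(1,a_1t,\dots,a_kt^k)$, second row $(1,a_1,\dots,a_k)$, row $r\ge3$ has zeros in its first $r-2$ entries, $1$ in entry $r-1$, then $a_1,a_2,\dots$. *)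

(* Defs.v *)
From HB Require Import structures.
From mathcomp Require Import all_boot all_order all_algebra.
Set Implicit Arguments. Unset Strict Implicit. Unset Printing Implicit Defensive.
Import GRing.Theory.
Local Open Scope ring_scope.

Definition qint (K : fieldType) (q : K) (m : nat) : K := \sum_(i < m) q ^+ i.

Definition qfact (K : fieldType) (q : K) (k : nat) : K :=
  \prod_(i < k) qint q i.+1.

(* The (k+1)x(k+1) matrix: row 0 = (a_0, a_1 t, ..., a_k t^k) (a_0 = 1 here),
   row i >= 1 has entry a_(j+1-i) at column j when j+1 >= i, and 0 otherwise.
   (Row 1 is (a_0, a_1, ..., a_k); row i >= 2 has a_0 = 1 at column i-1.) *)
Definition Pmat (K : fieldType) (a : nat -> K) (k : nat) : 'M[{poly K}]_(k.+1) :=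
  \matrix_(i < k.+1, j < k.+1)
    if i == 0 :> nat then (a j)%:P * 'X^j
    else if (i <= j.+1)%N then (a (j.+1 - i)%N)%:P else 0.

Definition Pfk (K : fieldType) (a : nat -> K) (k : nat) : {poly K} :=
  (-1) ^+ k * \det (Pmat a k).

(* Main.v *)
Require Import Defs.
From HB Require Import structures.
From mathcomp Require Import all_boot all_order all_algebra.
From mathcomp Require Import ring.
Set Implicit Arguments. Unset Strict Implicit.
Import GRing.Theory.
Local Open Scope ring_scope.

Section Aux.
Variables (K : fieldType) (q : K).
Hypothesis hq : forall m : nat, (0 < m)%N -> qint q m != 0.

Definition aa n := (qfact q n)^-1.
Definition QQ k : {poly K} := \prod_(i < k) ('X - (q ^+ i)%:P).
Definition pp k := (aa k)%:P * QQ k.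

Lemma qint_add k m : qint q (k + m) = qint q k + q ^+ k * qint q m.
Proof.
rewrite /qint big_split_ord /= big_distrr /=; congr (_ + _).
by apply: eq_bigr => i _; rewrite exprD.
Qed.

Lemma qint0 : qint q 0 = 0. Proof. by rewrite /qint big_ord0. Qed.

Lemma qfactS m : qfact q m.+1 = qfact q m * qint q m.+1.
Proof. by rewrite /qfact big_ord_recr. Qed.

Lemma qfact_neq0 m : qfact q m != 0.
Proof. elim: m => [|m IH]; first by rewrite /qfact big_ord0 oner_neq0.
by rewrite qfactS mulf_neq0 // hq. Qed.

Lemma aa0 : aa 0 = 1. Proof. by rewrite /aa /qfact big_ord0 invr1. Qed.

Lemma aaS m : qint q m.+1 * aa m.+1 = aa m.
Proof.
rewrite /aa qfactS invfM mulrCA mulfV ?mulr1 //; exact: hq.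
Qed.

Lemma Xp k : 'X * pp k = (qint q k.+1)%:P * pp k.+1 + (q ^+ k)%:P * pp k.
Proof.
rewrite /pp /QQ big_ord_recr /= -aaS polyCM.
set Q := \prod_(i < k) _. ring.
Qed.

Lemma ident j : (aa j)%:P * 'X^j = \sum_(k < j.+1) pp k * (aa (j - k))%:P.
Proof.
elim: j => [|j IH]; first by rewrite big_ord1 subnn /pp /QQ big_ord0 aa0 expr0 !mulr1.
have hz : (qint q j.+1)%:P != 0 :> {poly K} by rewrite polyC_eq0 hq.
apply: (mulfI hz).
have -> : (qint q j.+1)%:P * ((aa j.+1)%:P * 'X^(j.+1)) = 'X * ((aa j)%:P * 'X^j).
  by rewrite -(aaS j) polyCM exprS; ring.
rewrite IH big_distrr /=.
under eq_bigr do rewrite mulrA Xp mulrDl.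
rewrite big_split /=.
rewrite [in RHS]big_ord_recl /= subn0 mulrDr big_distrr /=.
idtac.
under [X in _ = _ + X]eq_bigr => i _ do rewrite subSS
   (_ : qint q j.+1 = qint q i.+1 + q ^+ i.+1 * qint q (j - i)) ?polyCD ?mulrDl
   -1?qint_add ?addSn ?subnKC // -1?ltnS //.
rewrite big_split /= addrCA; congr (_ + _).
  by apply: eq_bigr => i _; rewrite /bump leq0n add1n -mulrA.
rewrite [in LHS]big_ord_recl [in RHS]big_ord_recr /= subnn qint0 mulr0 mul0r addr0 subn0.
rewrite expr0 mul1r; congr (_ + _).
  by rewrite mulrCA -polyCM aaS.
apply: eq_bigr => i _ /=.
have -> : (j - i = (j - i.+1).+1)%N by rewrite subnSK.
rewrite -aaS !polyCM; ring.
Qed.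
End Aux.
Section Det.
Variables (K : fieldType) (q : K).
Hypothesis hq : forall m : nat, (0 < m)%N -> qint q m != 0.
Variable k : nat.

Definition Nm : 'M[{poly K}]_(k.+1) := \matrix_(i < k.+1, j < k.+1)
  if i == 0 :> nat then (if j == k :> nat then pp q k else 0) else Pmat (aa q) k i j.
Definition Lm : 'M[{poly K}]_(k.+1) := \matrix_(i < k.+1, c < k.+1)
  if i == 0 :> nat then (if c == 0 :> nat then 1 else pp q c.-1) else (i == c)%:R.

Lemma det_Lm : \det Lm = 1.
Proof.
rewrite -det_tr det_trig; last first.
  apply/is_trig_mxP => i j lt_ij; rewrite !mxE.
  have -> : (j == 0 :> nat) = false by case: (nat_of_ord j) lt_ij.
  by rewrite -val_eqE /= gtn_eqF.
apply: big1 => i _; rewrite !mxE; case: ifP => [/eqP -> //|]; by rewrite eqxx.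
Qed.

Lemma det_Nm : \det Nm = (-1) ^+ k * pp q k.
Proof.
rewrite (expand_det_row _ ord0) (bigD1 ord_max) //= big1 ?addr0; last first.
  by move=> j /negbTE hj; rewrite !mxE /= (_ : (j == k :> nat) = false) ?mul0r //;
     apply: contraNF hj => /eqP h; apply/eqP/val_inj.
rewrite !mxE /= eqxx /cofactor add0n mulrCA; congr (_ * _).
rewrite -det_tr det_trig; last first.
  apply/is_trig_mxP => i j lt_ij; rewrite !mxE lift0 lift_max /=.
  by rewrite ltnS leqNgt lt_ij.
rewrite big1 ?mulr1 // => i _; rewrite !mxE lift0 lift_max /= ltnS leqnn subSS subnn.
by rewrite /aa /qfact big_ord0 invr1.
Qed.

Lemma Pmat_eq : Pmat (aa q) k = Lm *m Nm.
Proof.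
apply/matrixP => i j; rewrite !mxE.
case: (eqVneq (nat_of_ord i) 0) => hi.
  have -> : i = ord0 by apply: val_inj. rewrite big_ord_recl !mxE /= mul1r.
  rewrite (ident hq) (big_ord_widen _ (fun c => pp q c * (aa q (j - c))%:P) (ltn_ord j)).
  rewrite [in LHS]big_mkcond /= big_ord_recr /= addrC; congr (_ + _).
    case: (eqVneq (nat_of_ord j) k) => hj.
      by rewrite hj ltnSn subnn /aa /qfact big_ord0 invr1 mulr1.
    have hjk : (j < k)%N by rewrite ltn_neqAle hj -ltnS ltn_ord.
    by rewrite ltnS leqNgt hjk /= ?(negbTE hj).
  apply: eq_bigr => c _; rewrite !mxE lift0 /= !ltnS subSS.
  by case: ifP => _; rewrite ?mulr0.
rewrite (bigD1 i) //= big1 ?addr0; last first.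
  move=> c hc; rewrite !mxE (negbTE hi).
  by rewrite (_ : (i == c) = false) ?mul0r // eq_sym; apply: negbTE.
by rewrite !mxE (negbTE hi) eqxx mul1r.
Qed.
End Det.

Theorem proposition2p4 (K : fieldType) (q : K)
  (hq : forall m : nat, (0 < m)%N -> qint q m != 0) (k : nat) :
  (1 <= k)%N ->
  Pfk (fun n => (qfact q n)^-1) k =
    ((qfact q k)^-1)%:P * \prod_(i < k) ('X - (q ^+ i)%:P).
Proof.
move=> _; rewrite /Pfk.
have -> : (fun n => (qfact q n)^-1) = aa q by [].
rewrite (Pmat_eq hq) det_mulmx det_Lm mul1r det_Nm mulrA -exprD -signr_odd oddD addbb.
by rewrite expr0 mul1r.
Qed.
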